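(* For every algorithm $A$ for List Update with Time Windows there exists an algorithm $B$ such that for every input sequence $\sigma$: (1) whenever $B$ performs an access serving requests at some time $t$, at least one of the requests it serves at time $t$ has deadline exactly $t$; and (2) $B(\sigma)\le A(\sigma)$.
   Context: List Update with Time Windows. A set $\mathbb{E}$ of $n$ elements is kept in an ordered list (position $1$ is the head). An input $\sigma$ is a sequence of requests $r_1,\dots,r_m$; request $r_k$ specifies an element $e_k\in\mathbb{E}$, an arrival time $a_k$ and a deadline $q_k\ge a_k$. At any time an algorithm may (a) perform an access up to position $i$, at cost $i$, which serves every pending request whose element currently lies in positions $1,\dots,i$; (b) swap two adjacent elements at cost $1$. Actions are instantaneous. An algorithm is valid if it serves every request at some time in $[a_k,q_k]$. The cost $A(\sigma)$ of an algorithm $A$ on $\sigma$ is total access cost plus number of swaps. *)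

(* Defs.v *)
From HB Require Import structures.
From mathcomp Require Import all_boot all_order all_algebra.
Set Implicit Arguments. Unset Strict Implicit. Unset Printing Implicit Defensive.
Import Order.TTheory GRing.Theory Num.Theory.
Local Open Scope ring_scope.

(* Actions (positions are 1-indexed, position 1 is the head):
   Access i : access up to position i (cost i);
   Swap j   : swap the elements at positions j and j+1 (cost 1). *)
Inductive action := Access of nat | Swap of nat.

Section LUTW.
Variables (T : finType) (R : realFieldType).

Definition request := (T * R * R)%type.
Definition req_elt (r : request) : T := r.1.1.
Definition req_arr (r : request) : R := r.1.2.
Definition req_dl  (r : request) : R := r.2.

(* An input: a finite sequence of requests with a_k <= q_k.
   Requests are identified by their index in the sequence. *)
Definition wf_input (sigma : seq request) : bool :=
  all (fun r => req_arr r <= req_dl r) sigma.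

(* A schedule (the behaviour of an algorithm on an input): a finite sequence
   of timed actions, performed in order; times are nondecreasing, several
   (instantaneous) actions may happen at the same time, in sequence order. *)
Definition schedule := seq (R * action).

Definition act_time (s : schedule) (k : nat) : R := (nth (0, Access 0) s k).1.
Definition act_of (s : schedule) (k : nat) : action := (nth (0, Access 0) s k).2.

Definition wf_action (n : nat) (a : action) : bool :=
  match a with
  | Access i => (0 < i <= n)%N
  | Swap j => (0 < j < n)%N
  end.

Definition wf_sched (n : nat) (s : schedule) : bool :=
  sorted (fun x y : R => x <= y) (map fst s) && all (wf_action n) (map snd s).

Definition swap_at (j : nat) (L : seq T) : seq T :=
  match drop j.-1 L with
  | x :: y :: rest => take j.-1 L ++ y :: x :: rest
  | _ => L
  end.

Definition apply_action (L : seq T) (a : action) : seq T :=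
  match a with
  | Access _ => L
  | Swap j => swap_at j L
  end.

(* list configuration just before the k-th action (0-indexed) *)
Definition config (L0 : seq T) (s : schedule) (k : nat) : seq T :=
  foldl apply_action L0 (map snd (take k s)).

Definition covers (L0 : seq T) (sigma : seq request) (s : schedule)
    (k r : nat) : bool :=
  (k < size s)%N &&
  match act_of s k, onth sigma r with
  | Access i, Some rq =>
      (req_arr rq <= act_time s k <= req_dl rq) &&
      (req_elt rq \in take i (config L0 s k))
  | _, _ => false
  end.

(* request r is served (newly, i.e. it was still pending) by the k-th action *)
Definition serves (L0 : seq T) (sigma : seq request) (s : schedule)
    (k r : nat) : bool :=
  covers L0 sigma s k r && ~~ has (fun k' => covers L0 sigma s k' r) (iota 0 k).

Definition valid (L0 : seq T) (sigma : seq request) (s : schedule) : Prop :=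
  forall r, (r < size sigma)%N -> exists k, covers L0 sigma s k r.

Definition deadline_serving (L0 : seq T) (sigma : seq request) (s : schedule)
    : Prop :=
  forall k r, serves L0 sigma s k r ->
    exists r', serves L0 sigma s k r' /\
      omap req_dl (onth sigma r') = Some (act_time s k).

Definition action_cost (a : action) : nat :=
  match a with Access i => i | Swap _ => 1%N end.

Definition cost (s : schedule) : nat := \sum_(a <- s) action_cost a.2.

End LUTW.

(* An (offline) algorithm maps each input to its schedule. *)
Definition algorithm (T : finType) (R : realFieldType) :=
  seq (request T R) -> schedule R.

(* Main.v *)
Require Import Defs.
From HB Require Import structures.
From mathcomp Require Import all_boot all_order all_algebra.
From mathcomp Require Import zify.
From Stdlib Require Import Classical IndefiniteDescription.
Set Implicit Arguments. Unset Strict Implicit. Unset Printing Implicit Defensive.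

Section Inv.
Variable T : finType.
Implicit Types P Q E C D : seq T.

Definition ninvs P Q := [set p : T * T | (index p.1 P < index p.2 P) && (index p.2 Q < index p.1 Q)].
Definition ninv P Q := #|ninvs P Q|.
Definition isperm P := perm_eq P (enum T).

Lemma isperm_mem P x : isperm P -> x \in P.
Proof. by move=> h; rewrite (perm_mem h) mem_enum. Qed.
Lemma isperm_uniq P : isperm P -> uniq P.
Proof. by move=> h; rewrite (perm_uniq h) enum_uniq. Qed.

Lemma index_neq P u v : isperm P -> u != v -> index u P != index v P.
Proof.
move=> h; apply: contra => /eqP e; apply/eqP.
by apply: (index_inj u) e; apply: isperm_mem.
Qed.

Lemma inv_tri P Q D : isperm Q -> ninv P D <= ninv P Q + ninv Q D.
Proof.
move=> hQ; rewrite /ninv; apply: leq_trans (leq_card_setU _ _).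
apply: subset_leq_card; apply/subsetP => -[u v]; rewrite !inE /= => /andP[h1 h2].
have uv : u != v by apply: contraTneq h1 => ->; rewrite ltnn.
have := index_neq hQ uv.
by case: (ltngtP (index u Q) (index v Q)) => //= _ _; rewrite ?h1 ?h2 ?orbT.
Qed.

Lemma ninv_refl P : ninv P P = 0.
Proof.
rewrite /ninv; apply/eqP; rewrite cards_eq0; apply/eqP/setP => -[u v].
rewrite !inE /=; apply/negbTE; rewrite negb_and -leqNgt; case: ltngtP => //.
Qed.


Lemma perm_swap_at j (L : seq T) : perm_eq (swap_at j L) L.
Proof.
rewrite /swap_at; case E: (drop j.-1 L) => [|x [|y rest]] //.
rewrite -{2}(cat_take_drop j.-1 L) E perm_cat2l.
by rewrite (perm_catCA [:: y] [:: x] rest).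
Qed.

Lemma isperm_swap j P : isperm P -> isperm (swap_at j P).
Proof. by move=> h; rewrite /isperm (perm_trans (perm_swap_at j P) h). Qed.

Lemma swap_dec Q j : 0 < j < size Q -> exists l1 x y l2,
  [/\ Q = l1 ++ x :: y :: l2, size l1 = j.-1 & swap_at j Q = l1 ++ y :: x :: l2].
Proof.
case: Q => [|x0 Q']; first by rewrite /= ltn0 andbF.
set Q := x0 :: Q' => /andP[j0 jQ].
have h1 : j.-1 < size Q by lia.
have E : drop j.-1 Q = nth x0 Q j.-1 :: nth x0 Q j :: drop j.+1 Q.
  rewrite (drop_nth x0 h1) (drop_nth x0 (n:=j.-1.+1)); last by lia.
  by have -> : j.-1.+1 = j by lia.
exists (take j.-1 Q), (nth x0 Q j.-1), (nth x0 Q j), (drop j.+1 Q); split.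
- by rewrite -E cat_take_drop.
- by rewrite size_take h1.
- by rewrite /swap_at E.
Qed.

Definition tr (s a : nat) := if a == s then s.+1 else if a == s.+1 then s else a.

Lemma uniq_facts (l1 l2 : seq T) (x y : T) : uniq (l1 ++ x :: y :: l2) ->
  [/\ x \notin l1, y \notin l1 & x != y].
Proof.
rewrite cat_uniq => /and3P[_ hn hu].
have hx : x \notin l1 by apply: contra hn => h; apply/hasP; exists x; rewrite ?mem_head.
have hy : y \notin l1.
  by apply: contra hn => h; apply/hasP; exists y; rewrite // in_cons mem_head orbT.
split=> //; move: hu => /andP[+ _]; rewrite in_cons negb_or => /andP[] //.
Qed.

Lemma index_sw (l1 l2 : seq T) (x y u : T) : uniq (l1 ++ x :: y :: l2) ->
  index u (l1 ++ y :: x :: l2) = tr (size l1) (index u (l1 ++ x :: y :: l2)).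
Proof.
move=> /uniq_facts [hx hy xy].
rewrite !index_cat /tr.
case: ifP => ul1.
  have h : index u l1 < size l1 by rewrite index_mem.
  case: eqP => [e|_]; first lia. case: eqP => [e|_]; first lia. done.
rewrite /=.
case: (eqVneq x u) => [e2|xu]; case: (eqVneq y u) => [e1|yu] /=.
- by move: xy; rewrite e1 e2 eqxx.
all: by repeat (case: eqP => ?); lia.
Qed.

Lemma index_x (l1 l2 : seq T) (x y : T) : uniq (l1 ++ x :: y :: l2) ->
  index x (l1 ++ x :: y :: l2) = size l1 /\ index y (l1 ++ x :: y :: l2) = (size l1).+1.
Proof.
move=> /uniq_facts [hx hy xy].
rewrite !index_cat (negPf hx) (negPf hy) /= eqxx; split; first by rewrite addn0.
by rewrite (negPf xy) eqxx addn1.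
Qed.

Lemma inv_swap1 Q j : isperm Q -> 0 < j < size Q -> ninv Q (swap_at j Q) <= 1.
Proof.
move=> hQ hj; have [l1 [x [y [l2 [EQ _ ES]]]]] := swap_dec hj.
rewrite ES /ninv -(cards1 (x, y)); apply: subset_leq_card; apply/subsetP => -[u v].
have hu := isperm_uniq hQ; rewrite EQ in hu.
have [ix iy] := index_x hu.
rewrite !inE /= !(index_sw _ hu) -EQ => /andP[h1 h2].
have ea : index u Q = size l1 /\ index v Q = (size l1).+1.
  by move: h1 h2; rewrite /tr; repeat (case: ifP => /eqP ?); lia.
case: ea => e1 e2; rewrite -EQ in ix iy.
have hm w : w \in Q := isperm_mem w hQ.
have -> : u = x by apply: (index_inj u (hm u) (hm x)); rewrite ix.
have -> : v = y by apply: (index_inj u (hm v) (hm y)); rewrite iy.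
by [].
Qed.

Lemma inv_swapR X Q j : isperm Q -> 0 < j < size Q -> ninv X (swap_at j Q) <= (ninv X Q).+1.
Proof.
move=> hQ hj; apply: leq_trans (inv_tri _ _ hQ) _.
by rewrite -addn1 leq_add2l inv_swap1.
Qed.

Lemma inv_bubble P Q (l1 l2 : seq T) (x y : T) : isperm P -> isperm Q -> P = l1 ++ x :: y :: l2 ->
  index y Q < index x Q -> ninv (l1 ++ y :: x :: l2) Q < ninv P Q.
Proof.
move=> hP hQ EP hyx; apply: proper_card; apply/properP; split.
  apply/subsetP => -[u v]; rewrite !inE /=.
  have hu := isperm_uniq hP; rewrite EP in hu.
  have [ix iy] := index_x hu.
  rewrite !(index_sw _ hu) -EP => /andP[h1 h2]; rewrite h2 andbT.
  rewrite -EP in ix iy.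
  have hm w : w \in P := isperm_mem w hP.
  move: h1; rewrite /tr.
  case: (eqVneq (index u P) (size l1).+1) => e1; case: (eqVneq (index v P) (size l1)) => e2;
    try by repeat (case: ifP => /eqP ?); lia.
  have eu : u = y by apply: (index_inj u (hm u) (hm y)); rewrite iy.
  have ev : v = x by apply: (index_inj u (hm v) (hm x)); rewrite ix.
  rewrite eu ev in h2; lia.
exists (x, y); rewrite !inE /=.
  have hu := isperm_uniq hP; rewrite EP in hu.
  by have [ix iy] := index_x hu; rewrite -EP in ix iy; rewrite ix iy ltnSn hyx.
have hu := isperm_uniq hP; rewrite EP in hu.
have [ix iy] := index_x hu.
rewrite !(index_sw _ hu) ix iy /tr eqxx; case: eqP => ?; first lia. by rewrite eqxx ltnNge leqnSn.
Qed.


Lemma size_isperm P : isperm P -> size P = #|T|.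
Proof. by move=> h; rewrite (perm_size h) cardE. Qed.

Lemma no_adj_eq P Q x0 : isperm P -> isperm Q ->
  (forall i, i.+1 < size P -> index (nth x0 P i) Q <= index (nth x0 P i.+1) Q) -> P = Q.
Proof.
move=> hP hQ h.
have hm w : w \in Q := isperm_mem w hQ.
apply: (@sorted_eq _ (fun u v => index u Q <= index v Q)).
- by move=> a b c; apply: leq_trans.
- move=> a b /andP[h1 h2]; apply: (index_inj a (hm a) (hm b)); apply/eqP.
  by rewrite eqn_leq h1 h2.
- by apply/(sortedP x0).
- apply/(sortedP x0) => i hi; have hu := isperm_uniq hQ.
  by rewrite !index_uniq // ltnW.
- by apply: perm_trans hP _; rewrite perm_sym.
Qed.

Lemma bubble P Q : isperm P -> isperm Q -> exists w : seq nat,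
  [/\ all (fun j => 0 < j < #|T|) w, foldl (fun L j => swap_at j L) P w = Q
    & size w <= ninv P Q].
Proof.
have [k hk] : exists k, ninv P Q < k by exists (ninv P Q).+1.
elim: k P hk => // k IH P hk hP hQ.
case: P hk hP => [|x0 P'] hk hP.
  exists [::]; split=> //=; have := size_isperm hQ; rewrite -(size_isperm hP).
  by case: (Q).
set P := x0 :: P'.
case: (boolP [exists i : 'I_(size P), (i.+1 < size P) &&
     (index (nth x0 P i.+1) Q < index (nth x0 P i) Q)]) => [/existsP [i /andP[hi hlt]]|hn]; last first.
  exists [::]; split=> //; apply: (@no_adj_eq _ _ x0 hP hQ) => i hi.
  rewrite leqNgt; apply: contra hn => hlt; apply/existsP.
  exists (Ordinal (ltnW hi)); by rewrite /= hi hlt.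
case: i hi hlt => i /= _ hi hlt.
have hj : 0 < i.+1 < size P by rewrite hi.
have [l1 [x [y [l2 [EP sl1 ES]]]]] := swap_dec hj.
have ex : x = nth x0 P i by rewrite EP nth_cat sl1 /= ltnn subnn.
have ey : y = nth x0 P i.+1 by rewrite EP nth_cat sl1 /= ltnNge leqnSn /= subSnn.
have hlt' : index y Q < index x Q by rewrite ex ey; exact: hlt.
have hlt2 := inv_bubble hP hQ EP hlt'.
have hP' : isperm (swap_at i.+1 P) by apply: isperm_swap.
have hk' : ninv (swap_at i.+1 P) Q < k.
  by rewrite ES; apply: leq_trans hlt2 _; rewrite -ltnS.
have [w [hw1 hw2 hw3]] := IH (swap_at i.+1 P) hk' hP' hQ.
exists (i.+1 :: w); split.
- by rewrite /= hw1 andbT -(size_isperm hP).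
- by [].
- by rewrite /= (leq_trans _ hlt2) // ltnS -ES.
Qed.


Lemma idx_filter (a : pred T) (E : seq T) u v : u \in E -> v \in E -> a u -> a v ->
  (index u (filter a E) < index v (filter a E)) = (index u E < index v E).
Proof.
elim: E => //= x E IH; rewrite !in_cons => hu hv au av.
case: (eqVneq u x) => [e1|xu]; case: (eqVneq v x) => [e2|xv].
- by rewrite e1 e2 !ltnn.
- rewrite -e1 au /= eqxx; have : u != v by rewrite e1 eq_sym.
  by move/negPf => ->.
- rewrite -e2 av /= eqxx; have : v != u by rewrite e2 eq_sym.
  by move/negPf => ->.
rewrite (negPf xu) (negPf xv) /= in hu hv.
case: ifP => ax /=; rewrite ?(eq_sym x) ?(negPf xu) ?(negPf xv) ?ltnS IH //.
Qed.

Lemma count_mem_le (l E : seq T) : uniq E -> count (mem l) E <= size l.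
Proof.
move=> hE; rewrite -size_filter; apply: uniq_leq_size; first exact: filter_uniq.
by move=> x; rewrite mem_filter => /andP[].
Qed.

Definition mU (E C : seq T) s j : pred T := [pred x | (x \in take s E) || (x \in take j C)].
Definition mergeD (E C : seq T) s j :=
  filter (mU E C s j) E ++ filter (predC (mU E C s j)) E.
Definition mergeM (E C : seq T) s j := count (mU E C s j) E.

Lemma merge_props E C s j : isperm E -> isperm C -> s <= size E ->
  [/\ isperm (mergeD E C s j), s <= mergeM E C s j <= s + j,
      (forall x, (x \in take (mergeM E C s j) (mergeD E C s j)) = mU E C s j x)
    & ninv E (mergeD E C s j) + ninv (mergeD E C s j) C <= ninv E C].
Proof.
move=> hE hC hs; set D := mergeD E C s j.
have hED : perm_eq D E by rewrite /D /mergeD perm_filterC.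
have hD : isperm D by apply: perm_trans hED hE.
have hm w : w \in E := isperm_mem w hE.
have huE := isperm_uniq hE.
split=> //.
- apply/andP; split.
    have h1 : count (mU E C s j) (take s E) = s.
      rewrite -[X in _ = X](size_takel hs); apply/eqP; rewrite -all_count; apply/allP => x hx.
      by rewrite /mU inE hx.
    have := count_cat (mU E C s j) (take s E) (drop s E); rewrite cat_take_drop /mergeM => ->.
    by rewrite h1 leq_addr.
  rewrite /mergeM; apply: leq_trans (_ : count (mem (take s E)) E + count (mem (take j C)) E <= _).
    rewrite -count_predUI; apply: leq_trans (leq_addr _ _).
    by apply: sub_count => x; rewrite /mU inE.
  by apply: leq_add; apply: leq_trans (count_mem_le _ huE) _; rewrite size_take_min geq_minl.
- move=> x; rewrite /D /mergeD /mergeM take_size_cat ?size_filter //.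
  by rewrite mem_filter hm andbT.
have key u v : (index u D < index v D) = if (mU E C s j) u == (mU E C s j) v then index u E < index v E else (mU E C s j) u.
  rewrite /D /mergeD !index_cat !mem_filter !hm !andbT /=.
  case: (boolP (mU E C s j u)) => Uu; case: (boolP (mU E C s j v)) => Uv;
    rewrite ?Uu ?Uv ?(negPf Uu) ?(negPf Uv) /=.
  - by rewrite idx_filter ?hm.
  - have : index u (filter (mU E C s j) E) < size (filter (mU E C s j) E)
      by rewrite index_mem mem_filter Uu hm.
    lia.
  - have : index v (filter (mU E C s j) E) < size (filter (mU E C s j) E)
      by rewrite index_mem mem_filter Uv hm.
    move=> h; apply/negbTE; rewrite -leqNgt; lia.
  - by rewrite ltn_add2l idx_filter ?hm ?inE.
have disj : [disjoint ninvs E D & ninvs D C].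
  rewrite -setI_eq0; apply/eqP/setP => -[u v]; rewrite !inE /=.
  by apply/negbTE; apply/and3P => -[/andP[_ h1] h2 _]; lia.
have [_ e] := leq_card_setU (ninvs E D) (ninvs D C); rewrite disj in e; rewrite /ninv -(eqP e).
apply: subset_leq_card; apply/subsetP => -[u v]; rewrite !inE /= !key.
have hmC w : w \in C := isperm_mem w hC.
rewrite /mU !inE !in_take ?hm ?hmC //.
have nuv : index u E != index v E -> True by [].
case: (ltnP (index u E) s); case: (ltnP (index v E) s);
  case: (ltnP (index u C) j); case: (ltnP (index v C) j) => /= h1 h2 h3 h4;
  case: (ltngtP (index u E) (index v E)) => //= h5;
  case: (ltngtP (index u C) (index v C)) => //= h6; lia.
Qed.

End Inv.

Import Order.TTheory GRing.Theory Num.Theory.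

Section Sched.
Variables (T : finType) (R : realFieldType).
Variable sigma : seq (request T R).
Local Open Scope ring_scope.

Definition swp (L : seq T) (j : nat) := swap_at j L.

Definition covAcc (C : seq T) (i : nat) (t : R) (r : nat) : bool :=
  match onth sigma r with
  | Some rq => (req_arr rq <= t <= req_dl rq) && (req_elt rq \in take i C)
  | None => false
  end.

Lemma covers_cons0 C (x : R * action) rest r :
  covers C sigma (x :: rest) 0 r = if x.2 is Access i then covAcc C i x.1 r else false.
Proof. by case: x => t [i|j]; rewrite /covers /act_of /act_time /config /= /covAcc; case: (onth sigma r). Qed.

Lemma covers_consS C (x : R * action) rest k r :
  covers C sigma (x :: rest) k.+1 r = covers (apply_action C x.2) sigma rest k r.
Proof. by []. Qed.

Lemma has_iotaS (f : nat -> bool) k :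
  has f (iota 0 k.+1) = f 0%N || has (fun k' => f k'.+1) (iota 0 k).
Proof. by rewrite /= -[1%N]addn0 iotaDl has_map. Qed.

Lemma serves_consS C (x : R * action) rest k r :
  serves C sigma (x :: rest) k.+1 r =
  serves (apply_action C x.2) sigma rest k r && ~~ covers C sigma (x :: rest) 0 r.
Proof.
rewrite /serves has_iotaS covers_consS negb_or.
by case: (covers _ _ _ _ r); case: (covers C _ _ _ _); case: has.
Qed.

Lemma covers_catR C (s1 s2 : schedule R) k r :
  covers C sigma (s1 ++ s2) (size s1 + k) r = covers (config C s1 (size s1)) sigma s2 k r.
Proof.
elim: s1 C => //= x s1 IH C; rewrite addSn covers_consS IH.
by [].
Qed.

Lemma covers_catL C (s1 s2 : schedule R) k r : (k < size s1)%N ->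
  covers C sigma (s1 ++ s2) k r = covers C sigma s1 k r.
Proof.
elim: s1 C k => // x s1 IH C [|k] /= hk.
  by rewrite !covers_cons0.
by rewrite !covers_consS IH.
Qed.

Lemma serves_catR C (s1 s2 : schedule R) k r :
  serves C sigma (s1 ++ s2) (size s1 + k) r =
  serves (config C s1 (size s1)) sigma s2 k r && ~~ has (fun k' => covers C sigma s1 k' r) (iota 0 (size s1)).
Proof.
elim: s1 C => [|x s1 IH] C; first by rewrite andbT.
have -> : size (x :: s1) = (size s1).+1 by [].
rewrite cat_cons addSn serves_consS IH has_iotaS negb_or.
rewrite -cat_cons (@covers_catL C (x :: s1)) //.
have -> : config C (x :: s1) (size s1).+1 = config (apply_action C x.2) s1 (size s1) by [].
have -> : has (fun k' => covers C sigma (x :: s1) k'.+1 r) (iota 0 (size s1)) =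
          has (fun k' => covers (apply_action C x.2) sigma s1 k' r) (iota 0 (size s1)) by [].
by case: serves; case: covers; case: has.
Qed.

Lemma serves_catL C (s1 s2 : schedule R) k r : (k < size s1)%N ->
  serves C sigma (s1 ++ s2) k r = serves C sigma s1 k r.
Proof.
move=> hk; rewrite /serves covers_catL //; congr (_ && ~~ _).
apply: eq_in_has => k'; rewrite mem_iota add0n => /andP[_ h].
by rewrite covers_catL //; apply: ltn_trans hk.
Qed.

Lemma act_time_catR (s1 s2 : schedule R) k : act_time (s1 ++ s2) (size s1 + k) = act_time s2 k.
Proof. by rewrite /act_time nth_cat ltnNge leq_addr /= addKn. Qed.

Lemma act_time_catL (s1 s2 : schedule R) k : (k < size s1)%N -> act_time (s1 ++ s2) k = act_time s1 k.
Proof. by move=> hk; rewrite /act_time nth_cat hk. Qed.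

Lemma config_size_cat (C : seq T) (s1 s2 : schedule R) :
  config C (s1 ++ s2) (size s1 + size s2) = config (config C s1 (size s1)) s2 (size s2).
Proof. by rewrite /config !take_size take_oversize ?size_cat // map_cat foldl_cat. Qed.


Fixpoint realw (t : R) (w : seq nat) (m : nat) : schedule R :=
  if w is j :: w' then (t, Swap j) :: realw t w' m else [:: (t, Access m)].

Definition plan := seq (R * seq nat * nat).

Fixpoint real (p : plan) : schedule R :=
  if p is g :: p' then realw g.1.1 g.1.2 g.2 ++ real p' else [::].

Definition plancost (p : plan) : nat := sumn (map (fun g => size g.1.2 + g.2)%N p).

Definition lob (Lo : option R) (t : R) := if Lo is Some L then L < t else true.

Fixpoint goodplan (F : seq T) (Cov : nat -> bool) (Lo : option R) (p : plan) : Prop :=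
  match p with
  | [::] => forall r, (r < size sigma)%N -> Cov r
  | g :: p' =>
      let E := foldl swp F g.1.2 in
      [/\ all (fun j => 0 < j < #|T|)%N g.1.2, (0 < g.2 <= #|T|)%N, lob Lo g.1.1,
          exists r, [/\ covAcc E g.2 g.1.1 r, ~~ Cov r & omap (@req_dl T R) (onth sigma r) = Some g.1.1]
        & goodplan E (fun r => Cov r || covAcc E g.2 g.1.1 r) (Some g.1.1) p']
  end.

Lemma size_realw t w m : size (realw t w m) = (size w).+1.
Proof. by elim: w => //= j w ->. Qed.

Lemma config_realw (C : seq T) t w m : config C (realw t w m) (size w) = foldl swp C w.
Proof. by elim: w C => //= j w IH C; rewrite -IH. Qed.

Lemma covers_realw C t w m k r : (k < size w)%N -> covers C sigma (realw t w m) k r = false.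
Proof.
elim: w C k => // j w IH C [|k] /= hk; first by rewrite covers_cons0.
by rewrite covers_consS IH.
Qed.

Lemma covers_realw_last C t w m r :
  covers C sigma (realw t w m) (size w) r = covAcc (foldl swp C w) m t r.
Proof.
elim: w C => /= [|j w IH] C; first by rewrite covers_cons0.
by rewrite covers_consS IH.
Qed.

Lemma has_realw C t w m r :
  has (fun k' => covers C sigma (realw t w m) k' r) (iota 0 (size (realw t w m))) =
  covAcc (foldl swp C w) m t r.
Proof.
rewrite size_realw -addn1 iotaD has_cat /= orbF.
rewrite -covers_realw_last; case: covers; rewrite ?orbT ?orbF //.
apply/hasPn => k; rewrite mem_iota add0n => /andP[_ hk].
by rewrite covers_realw.
Qed.

Lemma act_time_realw t w m k : (k < (size w).+1)%N -> act_time (realw t w m) k = t.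
Proof.
elim: w k => [|j w IH] k hk; first by case: k hk.
case: k hk => [|k] hk //; by rewrite /act_time /= -/(act_time _ k) IH.
Qed.

Lemma cost_realw t w m : cost (realw t w m) = (size w + m)%N.
Proof.
elim: w => [|j w IH]; rewrite /cost big_cons.
  by rewrite big_nil /= addn0.
by rewrite -/(realw t w m) -/(cost _) IH /= add1n.
Qed.

Lemma times_realw t w m : map fst (realw t w m) = nseq (size w).+1 t.
Proof. by elim: w => //= j w ->. Qed.


Lemma config_realw_full (C : seq T) t w m :
  config C (realw t w m) (size (realw t w m)) = foldl swp C w.
Proof. by rewrite /config take_size; elim: w C => //= j w IH C; rewrite IH. Qed.

Lemma wf_realw t w m : all (fun j => 0 < j < #|T|)%N w -> (0 < m <= #|T|)%N ->
  all (wf_action #|T|) (map snd (realw t w m)).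
Proof. by elim: w => [|j w IH] /=; [rewrite andbT|case/andP=> -> /IH]. Qed.

Lemma sorted_nseq_cat (t : R) n (l : seq R) : sorted (fun x y => x <= y) l -> all (fun x => t < x) l ->
  sorted (fun x y => x <= y) (nseq n.+1 t ++ l).
Proof.
move=> hs ha; elim: n => [|n IH] /=.
  rewrite path_sortedE ?hs ?andbT; last by move=> a b c; apply: le_trans.
  by apply: sub_all ha => x /ltW.
by rewrite lexx.
Qed.

Lemma cost_cat (s1 s2 : schedule R) : cost (s1 ++ s2) = (cost s1 + cost s2)%N.
Proof. by rewrite /cost big_cat. Qed.

Lemma realize (p : plan) F Cov Lo : goodplan F Cov Lo p ->
 let s := real p in
 [/\ sorted (fun x y : R => x <= y) (map fst s) && all (fun x => lob Lo x.1) s,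
     all (wf_action #|T|) (map snd s), cost s = plancost p,
     forall r, (r < size sigma)%N -> Cov r \/ exists k, covers F sigma s k r
   & forall k r, serves F sigma s k r -> ~~ Cov r -> exists r',
       [/\ serves F sigma s k r', ~~ Cov r' & omap (@req_dl T R) (onth sigma r') = Some (act_time s k)]].
Proof.
elim: p F Cov Lo => [|[[t w] m] p IH] F Cov Lo /=.
  move=> hc; split=> //; first by rewrite /cost big_nil.
  by move=> r /hc; left.
case=> hw hm hlo [r0 [c0 n0 d0]] hg.
set E := foldl swp F w in c0 hg.
have [/andP[s1 a1] wf1 c1 v1 d1] := IH _ _ _ hg.
set s' := real p in s1 a1 wf1 c1 v1 d1 *.
have hsz : (size w < size (realw t w m))%N by rewrite size_realw.
split.
- apply/andP; split.
    rewrite map_cat times_realw; apply: sorted_nseq_cat => //.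
    by rewrite all_map; apply: sub_all a1.
  rewrite all_cat; apply/andP; split.
    have -> : all (fun x : R * action => lob Lo x.1) (realw t w m) = all (lob Lo) (map fst (realw t w m)).
      by rewrite all_map.
    by rewrite times_realw all_nseq hlo orbT.
  apply: sub_all a1 => x /=; case: Lo hlo => //= L hL hx; exact: lt_trans hL hx.
- by rewrite map_cat all_cat wf_realw.
- by rewrite cost_cat cost_realw c1.
- move=> r hr; case: (v1 r hr) => [/orP[h|h]|[k hk]].
  + by left.
  + right; exists (size w); rewrite covers_catL // covers_realw_last; exact: h.
  + right; exists (size (realw t w m) + k)%N; rewrite covers_catR config_realw_full; exact: hk.
move=> k r hs hc.
case: (ltnP k (size (realw t w m))) => hk.
  rewrite serves_catL // in hs.
  case: (ltnP k (size w)) => hk2.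
    by move: hs; rewrite /serves covers_realw.
  have ek : k = size w by move: hk; rewrite size_realw; lia.
  subst k; exists r0; split=> //.
    rewrite serves_catL // /serves covers_realw_last c0 /=.
    by apply/hasPn => k; rewrite mem_iota add0n => /andP[_ hk3]; rewrite covers_realw.
  by rewrite act_time_catL // act_time_realw.
have [k' ek] : exists k', k = (size (realw t w m) + k')%N by exists (k - size (realw t w m))%N; lia.
subst k.
move: hs; rewrite serves_catR config_realw_full has_realw => /andP[hs hn].
have hc' : ~~ (Cov r || covAcc E m t r) by rewrite negb_or hc hn.
have [r' [h1 h2 h3]] := d1 _ _ hs hc'.
exists r'; split.
- by rewrite serves_catR config_realw_full has_realw h1 /=; move: h2; rewrite negb_or => /andP[].
- by move: h2; rewrite negb_or => /andP[].
- by rewrite act_time_catR.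
Qed.

End Sched.

Section Sim.
Variables (T : finType) (R : realFieldType).
Variable sigma : seq (request T R).
Local Open Scope ring_scope.
Local Notation N := (size sigma).
Local Notation n := #|T|.

Definition qv (r : nat) : R := if onth sigma r is Some rq then req_dl rq else 0.

Definition att (E : seq T) (s : nat) (tm tau : R) (r : nat) : bool :=
  if onth sigma r is Some rq then
    [&& req_elt rq \in take s E, req_arr rq <= tm & tau <= req_dl rq]
  else false.

Lemma onth_lt r rq : onth sigma r = Some rq -> (r < N)%N.
Proof. by elim: sigma r => [|x l IH] [|r] //= /IH. Qed.

Lemma argmin (P : nat -> bool) (f : nat -> R) M : (exists r, (r < M)%N /\ P r) ->
  exists r, [/\ (r < M)%N, P r & forall r', (r' < M)%N -> P r' -> f r <= f r'].
Proof.
elim: M => [[r [//]]|M IH] [r [hr pr]].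
case: (boolP [exists r : 'I_M, P r]) => [/existsP [[r0 h0] /= p0]|hn].
  have [r1 [h1 p1 m1]] := IH (ex_intro _ r0 (conj h0 p0)).
  case: (boolP (P M && (f M < f r1))) => [/andP[pM lM]|hM].
    exists M; split=> // r' hr' pr'.
    case: (ltngtP r' M) => [lt|gt|->] //; last by move: hr'; lia.
    exact: le_trans (ltW lM) (m1 _ lt pr').
  exists r1; split=> //; first by apply: ltn_trans h1 _.
  move=> r' hr' pr'; case: (ltngtP r' M) => [lt|gt|e]; first exact: m1.
    by move: hr'; lia.
  subst r'; move: hM; rewrite pr' /= -leNgt; exact.
have pM : P M.
  case: (ltngtP r M) => [lt|gt|<-] //; last by move: hr; lia.
  by case/existsP: hn; exists (Ordinal lt).
exists M; split=> // r' hr' pr'.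
case: (ltngtP r' M) => [lt|gt|->] //; last by move: hr'; lia.
by case/existsP: hn; exists (Ordinal lt).
Qed.

Lemma att_cov E s tm tau r : tm <= tau -> att E s tm tau r -> covAcc sigma E s tau r.
Proof.
rewrite /att /covAcc => h; case: (onth sigma r) => // rq /and3P[h1 h2 h3].
by rewrite h1 h3 (le_trans h2 h) andbT.
Qed.

Lemma close_group F C Cov Lo E s tm tau (rest : schedule R) :
  isperm F -> isperm E -> (0 < s <= n)%N -> lob Lo tm -> tm <= tau ->
  (exists r, [/\ att E s tm tau r, ~~ Cov r & omap (@req_dl T R) (onth sigma r) = Some tau]) ->
  (exists p, goodplan sigma E (fun r => Cov r || covAcc sigma E s tau r) (Some tau) p /\
        (plancost p <= cost rest + ninv E C)%N) ->
  exists p, goodplan sigma F Cov Lo p /\ (plancost p <= cost rest + ninv F E + s + ninv E C)%N.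
Proof.
move=> hF hE hs hlo htm [r [ra rc rd]] [p [hp cp]].
have [w [hw1 hw2 hw3]] := bubble hF hE.
exists ((tau, w, s) :: p); split.
  rewrite /= hw2; split=> //.
  - by case: Lo hlo => //= L hL; apply: lt_le_trans hL htm.
  - by exists r; split=> //; apply: att_cov ra.
rewrite /plancost /= -/(plancost p).
by move: hw3 cp; lia.
Qed.


Definition NoGroup (rest : schedule R) : Prop := forall F C (Cov : nat -> bool) Lo,
  isperm F -> isperm C -> sorted (fun x y : R => x <= y) (map fst rest) ->
  all (fun x => lob Lo x.1) rest -> all (wf_action n) (map snd rest) ->
  (forall r, (r < N)%N -> Cov r \/ exists k, covers C sigma rest k r) ->
  exists p, goodplan sigma F Cov Lo p /\ (plancost p <= cost rest + ninv F C)%N.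

Definition Group (rest : schedule R) : Prop := forall F C (Cov : nat -> bool) Lo E s tm tau,
  isperm F -> isperm C -> isperm E -> (0 < s <= n)%N ->
  sorted (fun x y : R => x <= y) (map fst rest) -> all (fun x => tm <= x.1) rest ->
  all (wf_action n) (map snd rest) -> lob Lo tm -> tm <= tau ->
  (exists r, [/\ att E s tm tau r, ~~ Cov r & omap (@req_dl T R) (onth sigma r) = Some tau]) ->
  (forall r, (r < N)%N -> [\/ Cov r, att E s tm tau r | exists k, covers C sigma rest k r]) ->
  exists p, goodplan sigma F Cov Lo p /\ (plancost p <= cost rest + ninv F E + s + ninv E C)%N.

Lemma cost_cons (x : R * action) rest : cost (x :: rest) = (action_cost x.2 + cost rest)%N.
Proof. by rewrite /cost big_cons. Qed.

Lemma nogroup_nil : NoGroup [::].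
Proof.
move=> F C Cov Lo _ _ _ _ _ hv; exists [::]; split=> //=.
by move=> r /hv [//|[k]]; rewrite /covers.
Qed.

Lemma group_of_nogroup rest : NoGroup rest ->
  forall F C (Cov : nat -> bool) Lo E s tm tau,
  isperm F -> isperm C -> isperm E -> (0 < s <= n)%N ->
  sorted (fun x y : R => x <= y) (map fst rest) ->
  all (wf_action n) (map snd rest) -> lob Lo tm -> tm <= tau ->
  all (fun x => lob (Some tau) x.1) rest ->
  (exists r, [/\ att E s tm tau r, ~~ Cov r & omap (@req_dl T R) (onth sigma r) = Some tau]) ->
  (forall r, (r < N)%N -> [\/ Cov r, att E s tm tau r | exists k, covers C sigma rest k r]) ->
  exists p, goodplan sigma F Cov Lo p /\ (plancost p <= cost rest + ninv F E + s + ninv E C)%N.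
Proof.
move=> hng F C Cov Lo E s tm tau hF hC hE hs hso hwf hlo htm hall hr hv.
have hcl := close_group (C := C) (rest := rest) hF hE hs hlo htm hr; apply: hcl.
apply: hng => // r hr'; case: (hv r hr') => [h|h|h].
- by left; rewrite h.
- by left; rewrite (att_cov htm h) orbT.
- by right.
Qed.


Lemma covAccE C i t r : covAcc sigma C i t r -> exists rq,
  [/\ onth sigma r = Some rq, req_arr rq <= t, t <= req_dl rq & req_elt rq \in take i C].
Proof.
rewrite /covAcc; case: (onth sigma r) => // rq /andP[/andP[h1 h2] h3].
by exists rq.
Qed.

Lemma attI E s tm tau r rq : onth sigma r = Some rq -> req_elt rq \in take s E ->
  req_arr rq <= tm -> tau <= req_dl rq -> att E s tm tau r.
Proof. by rewrite /att => -> -> -> ->. Qed.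

Lemma attE E s tm tau r : att E s tm tau r -> exists rq,
  [/\ onth sigma r = Some rq, req_elt rq \in take s E, req_arr rq <= tm & tau <= req_dl rq].
Proof.
rewrite /att; case: (onth sigma r) => // rq /and3P[h1 h2 h3].
by exists rq.
Qed.

Lemma sorted_cons_inv (x : R * action) rest :
  sorted (fun x y : R => x <= y) (map fst (x :: rest)) ->
  sorted (fun x y : R => x <= y) (map fst rest) /\ all (fun y => x.1 <= y.1) rest.
Proof.
move=> /= h; split; first exact: path_sorted h.
have := order_path_min (@le_trans _ R) h; by rewrite all_map.
Qed.

Lemma nogroup_cons x rest : NoGroup rest -> Group rest -> NoGroup (x :: rest).
Proof.
move=> ng g F C Cov Lo hF hC hso hlo hwf hv.
have [hso' hmin] := sorted_cons_inv hso.
move: hlo hwf => /= /andP[hlo0 hlo'] /andP[hwf0 hwf'].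
have hsC := size_isperm hC.
case: x hso hmin hlo0 hwf0 hv => t [i|j] /= hso hmin hlo0 hwf0 hv; last first.
  have hC' := isperm_swap j hC.
  have hv' : forall r, (r < N)%N -> Cov r \/ exists k, covers (swap_at j C) sigma rest k r.
    move=> r hr; case: (hv r hr) => [h|[k hk]]; first by left.
    case: k hk => [|k] hk; first by rewrite covers_cons0 in hk.
    by right; exists k.
  have [p [hp cp]] := ng F (swap_at j C) Cov Lo hF hC' hso' hlo' hwf' hv'.
  exists p; split=> //; rewrite cost_cons /=.
  have := inv_swapR F hC (j:=j); rewrite hsC hwf0 => /(_ isT) h.
  by move: cp h; lia.
case: (boolP [exists r : 'I_N, ~~ Cov r && covAcc sigma C i t r]) => [hex|hn].
  have hex' : exists r, (r < N)%N /\ ~~ Cov r && covAcc sigma C i t r.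
    by case/existsP: hex => -[r hr] h; exists r.
  have [r1 [hr1 /andP[nc1 ca1] m1]] := argmin qv hex'.
  have [rq1 [o1 a1 t1 e1]] := covAccE ca1.
  have q1 : qv r1 = req_dl rq1 by rewrite /qv o1.
  have hw : (0 < i <= n)%N by [].
  have htau : t <= qv r1 by rewrite q1.
  have hr : exists r, [/\ att C i t (qv r1) r, ~~ Cov r & omap (@req_dl T R) (onth sigma r) = Some (qv r1)].
    exists r1; split=> //; last by rewrite o1 q1.
    by apply: (attI o1 e1 a1); rewrite q1.
  have hv' : forall r, (r < N)%N -> [\/ Cov r, att C i t (qv r1) r | exists k, covers C sigma rest k r].
    move=> r hr'; case: (hv r hr') => [h|[k hk]]; first by apply: Or31.
    case: k hk => [|k] hk; last by apply: Or33; exists k.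
    rewrite covers_cons0 /= in hk.
    case: (boolP (Cov r)) => nc; first by apply: Or31.
    apply: Or32; have [rq [o a b e]] := covAccE hk.
    apply: (attI o e a); have := m1 r hr'; rewrite nc hk /= => /(_ isT).
    by rewrite /qv o.
  have [p [hp cp]] := g F C Cov Lo C i t (qv r1) hF hC hC hw hso' hmin hwf' hlo0 htau hr hv'.
  exists p; split=> //; rewrite cost_cons /=; apply: leq_trans cp _; by rewrite ninv_refl addn0 addnC addnA.
have hv' : forall r, (r < N)%N -> Cov r \/ exists k, covers C sigma rest k r.
  move=> r hr; case: (hv r hr) => [h|[k hk]]; first by left.
  case: k hk => [|k] hk; last by right; exists k.
  rewrite covers_cons0 /= in hk; left; apply: contraNT hn => nc.
  by apply/existsP; exists (Ordinal hr); rewrite /= nc hk.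
have [p [hp cp]] := ng F C Cov Lo hF hC hso' hlo' hwf' hv'.
exists p; split=> //; rewrite cost_cons /=; by move: cp; lia.
Qed.


Lemma group_nil : Group [::].
Proof.
move=> F C Cov Lo E s tm tau hF hC hE hs hso hmin hwf hlo htm hr hv.
exact: (group_of_nogroup nogroup_nil hF hC hE hs hso hwf hlo htm isT hr hv).
Qed.

Lemma group_cons x rest : NoGroup (x :: rest) -> Group rest -> Group (x :: rest).
Proof.
move=> ng' g F C Cov Lo E s tm tau hF hC hE hs hso hmin hwf hlo htm hr hv.
have [hso' hmin'] := sorted_cons_inv hso.
move: (hmin) hwf => /= /andP[hmin0 hminr] /andP[hwf0 hwf'].
have hsC := size_isperm hC.
have hsE := size_isperm hE.
case: x ng' hso hmin hmin' hmin0 hwf0 hv => t [i|j] /= ng' hso hmin hmin' hmin0 hwf0 hv; last first.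
  have hC' := isperm_swap j hC.
  have hv' : forall r, (r < N)%N -> [\/ Cov r, att E s tm tau r | exists k, covers (swap_at j C) sigma rest k r].
    move=> r hr'; case: (hv r hr') => [h|h|[k hk]]; [exact: Or31|exact: Or32|].
    case: k hk => [|k] hk; first by rewrite covers_cons0 in hk.
    by apply: Or33; exists k.
  have [p [hp cp]] := g F (swap_at j C) Cov Lo E s tm tau hF hC' hE hs hso' hminr hwf' hlo htm hr hv'.
  exists p; split=> //; rewrite cost_cons /=.
  have := inv_swapR E hC (j:=j); rewrite hsC hwf0 => /(_ isT) h.
  by clear -cp h; move: cp h; lia.
case: (leP t tau) => htt; last first.
  apply: (group_of_nogroup ng' hF hC hE hs hso _ hlo htm _ hr hv).
    by rewrite /= hwf0 hwf'.
  rewrite /= htt /=; apply: sub_all hmin' => y /= hy; exact: lt_le_trans htt hy.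
have hsn : (s <= size E)%N by rewrite hsE; case/andP: hs.
have [hD hs' hmemD hinvD] := merge_props i hE hC hsn.
set D := mergeD E C s i in hD hmemD hinvD.
set s' := mergeM E C s i in hs' hmemD.
have [r0 [ar0 nr0 dr0]] := hr.
have [tau' [r2 [/andP[htt' htau'] ho2 att2 nc2 m2]]] : exists tau' r2, [/\ t <= tau' <= tau,
    omap (@req_dl T R) (onth sigma r2) = Some tau', att D s' t tau' r2, ~~ Cov r2 &
    forall r, (r < N)%N -> ~~ Cov r -> covAcc sigma C i t r -> tau' <= qv r].
  have att0 : att D s' t tau r0.
    have [rq [o e a b]] := attE ar0.
    apply: (attI o _ (le_trans a hmin0) b).
    by rewrite hmemD /mU inE e.
  case: (boolP [exists r : 'I_N, ~~ Cov r && covAcc sigma C i t r]) => [hex|hn]; last first.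
    exists tau, r0; split=> //; first by rewrite htt lexx.
    move=> r hr' nc ca.
    by case/existsP: hn; exists (Ordinal hr'); rewrite /= nc ca.
  have hex' : exists r, (r < N)%N /\ ~~ Cov r && covAcc sigma C i t r.
    by case/existsP: hex => -[r hr'] h; exists r.
  have [r1 [hr1 /andP[nc1 ca1] m1]] := argmin qv hex'.
  have [rq1 [o1 a1 t1 e1]] := covAccE ca1.
  have q1 : qv r1 = req_dl rq1 by rewrite /qv o1.
  case: (ltP (qv r1) tau) => hq.
    exists (qv r1), r1; split=> //.
    - by rewrite (ltW hq) andbT q1.
    - by rewrite o1 q1.
    - apply: (attI o1 _ a1); last by rewrite q1.
      by rewrite hmemD /mU inE e1 orbT.
    - by move=> r hr' nc ca; apply: m1 => //; rewrite nc ca.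
  exists tau, r0; split=> //; first by rewrite htt lexx.
  move=> r hr' nc ca.
  by apply: le_trans hq (m1 _ hr' _); rewrite nc ca.
have hs'' : (0 < s' <= n)%N.
  case/andP: hs' => h1 _; case/andP: hs => h0 h2; rewrite (leq_trans h0 h1) /=.
  by rewrite /s' /mergeM -hsE count_size.
have hlo' : lob Lo t by case: (Lo) hlo => //= L hL; apply: lt_le_trans hL hmin0.
have hr' : exists r, [/\ att D s' t tau' r, ~~ Cov r & omap (@req_dl T R) (onth sigma r) = Some tau'].
  by exists r2.
have hv' : forall r, (r < N)%N -> [\/ Cov r, att D s' t tau' r | exists k, covers C sigma rest k r].
  move=> r hr1; case: (hv r hr1) => [h|h|[k hk]]; first exact: Or31.
  - apply: Or32; have [rq [o e a b]] := attE h.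
    apply: (attI o _ (le_trans a hmin0) (le_trans htau' b)).
    by rewrite hmemD /mU inE e.
  case: k hk => [|k] hk; last by apply: Or33; exists k.
  rewrite covers_cons0 /= in hk.
  case: (boolP (Cov r)) => nc; first by apply: Or31.
  apply: Or32; have [rq [o a b e]] := covAccE hk.
  apply: (attI o _ a); first by rewrite hmemD /mU inE e orbT.
  by have := m2 r hr1 nc hk; rewrite /qv o.
have [p [hp cp]] := g F C Cov Lo D s' t tau' hF hC hD hs'' hso' hmin' hwf' hlo' htt' hr' hv'.
exists p; split=> //; rewrite cost_cons /=.
have h1 := @inv_tri _ F E D hE.
case/andP: hs' => _ h2.
by clear -cp h1 h2 hinvD; move: cp h1 h2 hinvD; lia.
Qed.

Lemma sim rest : NoGroup rest /\ Group rest.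
Proof.
elim: rest => [|x rest [ng g]]; first by split; [exact: nogroup_nil|exact: group_nil].
have ng' := @nogroup_cons x rest ng g.
by split=> //; apply: group_cons.
Qed.

End Sim.

Lemma good_exists (T : finType) (R : realFieldType) (L0 : seq T)
  (HL0 : perm_eq L0 (enum T)) (sigma : seq (request T R)) (sA : schedule R)
  (HA : wf_sched #|T| sA) :
  exists s : schedule R, wf_sched #|T| s /\
    (wf_input sigma ->
      (valid L0 sigma sA -> valid L0 sigma s) /\
      deadline_serving L0 sigma s /\ (cost s <= cost sA)%N).
Proof.
case: (classic (valid L0 sigma sA)) => hv; last first.
  exists [::]; split=> //; split=> //; split.
    by move=> k r; rewrite /serves /covers.
  by rewrite /cost big_nil.
have hP : isperm L0 := HL0.
case/andP: HA => hso hwf.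
have [ng _] := sim sigma sA.
have [p [hp cp]] := ng L0 L0 (fun _ => false) None hP hP hso (sub_all (fun x _ => isT) (all_predT _)) hwf
  (fun r hr => or_intror (hv r hr)).
have [/andP[s1 _] wf1 c1 v1 d1] := realize hp.
exists (real p); split; first by rewrite /wf_sched s1 wf1.
move=> _; split; [|split].
- move=> _ r hr; by case: (v1 r hr).
- move=> k r hs; have [r' [h1 _ h3]] := d1 k r hs isT.
  by exists r'.
- by rewrite c1; move: cp; rewrite ninv_refl addn0.
Qed.

Theorem mainTheorem7 (T : finType) (R : realFieldType) (L0 : seq T)
  (HL0 : perm_eq L0 (enum T))
  (A : algorithm T R) (HA : forall sigma, wf_sched #|T| (A sigma)) :
  exists B : algorithm T R,
    (forall sigma, wf_sched #|T| (B sigma)) /\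
    forall sigma, wf_input sigma ->
      (valid L0 sigma (A sigma) -> valid L0 sigma (B sigma)) /\
      deadline_serving L0 sigma (B sigma) /\
      (cost (B sigma) <= cost (A sigma))%N.
Proof.
pose G := fun sigma => constructive_indefinite_description _ (good_exists HL0 sigma (HA sigma)).
exists (fun sigma => proj1_sig (G sigma)); split.
  by move=> sigma; case: (proj2_sig (G sigma)).
by move=> sigma; case: (proj2_sig (G sigma)) => _; apply.
Qed.
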